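(* $F_{\{3,8\},\{0\}}$ is nonempty (the bisectors $\mathcal{B}_3$ and $\mathcal{B}_8$ meet in $H^2_\mathbb{C}$), but $\overline{F}_{\{3,8\},\{0,2,6\}}=\emptyset$. In particular $F_{\{3,8\}}=\emptyset$.
   Context: Hermitian form on $\mathbb{C}^3$: $\langle V,W\rangle=V_1\overline{W_3}+V_2\overline{W_2}+V_3\overline{W_1}$. Let $$G_1=\begin{pmatrix}1&1&-\frac{1+i\sqrt7}{2}\\0&1&-1\\0&0&1\end{pmatrix},\quad G_3=\begin{pmatrix}1&0&0\\-1&1&0\\ \frac{-1+i\sqrt7}{2}&1&1\end{pmatrix},\quad G_2=G_3G_1^{-1}G_3^{-1}G_1,$$ $Q=(1,0,0)^T$. Set $\gamma_1=G_2,\gamma_2=G_2^{-1},\gamma_3=G_3,\gamma_4=G_3^{-1}$ and, for $k\ge1$ and $1\le j\le4$, $\gamma_{8k-4+j}=G_1^k\gamma_jG_1^{-k}$, $\gamma_{8k+j}=G_1^{-k}\gamma_jG_1^{k}$. For $Z\in\mathbb{C}^3\setminus\{0\}$ let $f_0(Z)=\langle Z,Z\rangle$ and $f_j(Z)=|\langle Z,Q\rangle|^2-|\langle Z,\gamma_jQ\rangle|^2$ for $j\ge1$ (signs defined on $\mathbb{C}P^2$); $\mathcal{B}_j=\{f_j=0,f_0<0\}$. Let $I=\{0,1,2,\dots\}$. For disjoint $J,K\subset I$, $F_{J,K}=\{[Z]\in\mathbb{C}P^2: f_j(Z)=0\ \forall j\in J,\ f_i(Z)<0\ \forall i\in K\}$,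 $\overline{F}_{J,K}$ is defined likewise with $f_i\le0$ for $i\in K$, and $F_J=F_{J,I\setminus J}$. *)

(* Defs.v *)
From HB Require Import structures.
From mathcomp Require Import all_boot all_order all_algebra.
Set Implicit Arguments. Unset Strict Implicit. Unset Printing Implicit Defensive.
Import Order.TTheory GRing.Theory Num.Theory.
Local Open Scope ring_scope.

Section Defs.
Variable C : numClosedFieldType.

Definition mx3 (a b c d e f g h k : C) : 'M[C]_3 :=
  \matrix_(i < 3, j < 3)
    nth 0 (nth [::] [:: [:: a; b; c]; [:: d; e; f]; [:: g; h; k]] i) j.

(* Hermitian form <V,W> = V1 conj(W3) + V2 conj(W2) + V3 conj(W1) *)
Definition herm (V W : 'cV[C]_3) : C :=
  \sum_(i < 3) V i 0 * (W (rev_ord i) 0)^*.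

Definition G1 : 'M[C]_3 :=
  mx3 1 1 (- ((1 + 'i * sqrtC 7) / 2))
      0 1 (-1)
      0 0 1.

Definition G3 : 'M[C]_3 :=
  mx3 1 0 0
      (-1) 1 0
      ((-1 + 'i * sqrtC 7) / 2) 1 1.

Definition G2 : 'M[C]_3 := G3 * invmx G1 * invmx G3 * G1.

Definition Qpt : 'cV[C]_3 := \col_(i < 3) (if i == ord0 then 1 else 0).

Definition gamma_base (i : nat) : 'M[C]_3 :=
  match i with
  | 1 => G2
  | 2 => invmx G2
  | 3 => G3
  | _ => invmx G3
  end.

(* For j >= 1: j = 8k + i (k >= 0, 1 <= i <= 4): gamma_j = G1^-k gamma_i G1^k
   (k = 0 gives gamma_1..gamma_4);
   j = 8k - 4 + i (k >= 1, 1 <= i <= 4): gamma_j = G1^k gamma_i G1^-k.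
   gamma 0 is unused (f_0 is defined separately). *)
Definition gamma (j : nat) : 'M[C]_3 :=
  if (1 <= j %% 8 <= 4)%N then
    let k := (j %/ 8)%N in
    (invmx G1) ^+ k * gamma_base (j %% 8) * G1 ^+ k
  else
    let k := ((j + 4) %/ 8)%N in
    G1 ^+ k * gamma_base ((j + 4) %% 8) * (invmx G1) ^+ k.

Definition fj (j : nat) (Z : 'cV[C]_3) : C :=
  if j == 0%N then herm Z Z
  else `|herm Z Qpt| ^+ 2 - `|herm Z (gamma j *m Qpt)| ^+ 2.

(* Points of CP^2 are represented by nonzero vectors; all conditions are
   invariant under scaling by nonzero scalars. *)
Definition F (J K : nat -> Prop) (Z : 'cV[C]_3) : Prop :=
  Z != 0 /\ (forall j, J j -> fj j Z = 0) /\ (forall i, K i -> fj i Z < 0).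

Definition Fbar (J K : nat -> Prop) (Z : 'cV[C]_3) : Prop :=
  Z != 0 /\ (forall j, J j -> fj j Z = 0) /\ (forall i, K i -> fj i Z <= 0).

End Defs.

(* Main.v *)
Require Import Defs.
From HB Require Import structures.
From mathcomp Require Import all_boot all_order all_algebra.
From mathcomp Require Import ring.
Import Order.TTheory GRing.Theory Num.Theory.
Local Open Scope ring_scope.

Section S.
Variable C : numClosedFieldType.

Definition col3 (a b c : C) : 'cV[C]_3 := \col_(i < 3) nth 0 [:: a; b; c] i.

Lemma mx3_mulc (a b c d e f g h k x y z : C) :
  mx3 a b c d e f g h k *m col3 x y z =
  col3 (a*x+b*y+c*z) (d*x+e*y+f*z) (g*x+h*y+k*z).
Proof.
apply/matrixP => i j; rewrite !mxE !big_ord_recr big_ord0 /= !mxE /= add0r.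
by case: i => [[|[|[|?]]] ?].
Qed.

Lemma mx3_mul (a b c d e f g h k a' b' c' d' e' f' g' h' k' : C) :
  mx3 a b c d e f g h k *m mx3 a' b' c' d' e' f' g' h' k' =
  mx3 (a*a'+b*d'+c*g') (a*b'+b*e'+c*h') (a*c'+b*f'+c*k')
      (d*a'+e*d'+f*g') (d*b'+e*e'+f*h') (d*c'+e*f'+f*k')
      (g*a'+h*d'+k*g') (g*b'+h*e'+k*h') (g*c'+h*f'+k*k').
Proof.
apply/matrixP => i j; rewrite !mxE !big_ord_recr big_ord0 /= !mxE /= add0r.
by case: i => [[|[|[|?]]] ?]; case: j => [[|[|[|?]]] ?].
Qed.

Lemma mx3_1 : mx3 (1:C) 0 0 0 1 0 0 0 1 = 1%:M.
Proof.
by apply/matrixP => i j; rewrite !mxE; case: i => [[|[|[|?]]] ?]; case: j => [[|[|[|?]]] ?].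
Qed.

Lemma herm_col3 (Z : 'cV[C]_3) x y z :
  herm Z (col3 x y z) = Z 0 0 * z^* + Z 1 0 * y^* + Z 2 0 * x^*.
Proof. rewrite /herm !big_ord_recr big_ord0 /= !mxE /= add0r; congr (Z _ _ * _ + Z _ _ * _ + Z _ _ * _); exact: val_inj. Qed.

Lemma Q_col : Qpt C = col3 1 0 0.
Proof. by apply/matrixP => i j; rewrite !mxE; case: i => [[|[|[|?]]] ?]. Qed.

Lemma inv_of (A B : 'M[C]_3) : A *m B = 1%:M -> invmx A = B.
Proof.
move=> h; have [uA _] := mulmx1_unit h.
by rewrite -[invmx A]mulmx1 -h mulmxA mulVmx // mul1mx.
Qed.

Definition w : C := locked ((-1 + 'i * sqrtC 7) / 2).

Lemma w2 : w ^+ 2 = - w - 2.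
Proof.
rewrite /w -lock; have h : ('i * sqrtC 7) ^+ 2 = - 7 :> C by rewrite exprMn sqrCi sqrtCK mulN1r.
field: h. by [].
Qed.

Lemma wc : w^* = -1 - w.
Proof.
rewrite /w -lock rmorphM rmorphD rmorphN rmorph1 rmorphM /= conjCi (geC0_conj (x:=sqrtC 7)); last by rewrite sqrtC_ge0 ler0n.
rewrite fmorphV rmorph_nat; field. by [].
Qed.


Lemma herm_gen (Z V : 'cV[C]_3) :
  herm Z V = Z 0 0 * (V 2 0)^* + Z 1 0 * (V 1 0)^* + Z 2 0 * (V 0 0)^*.
Proof. rewrite /herm !big_ord_recr big_ord0 /= add0r; congr (Z _ _ * (V _ _)^* + Z _ _ * (V _ _)^* + Z _ _ * (V _ _)^*); exact: val_inj. Qed.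

Lemma e1 : - ((1 + 'i * sqrtC 7) / 2) = -1 - w :> C.
Proof. rewrite /w -lock; field. by []. Qed.

Definition G1m := mx3 1 1 (-1 - w) 0 1 (-1) 0 0 1.
Definition G3m := mx3 1 0 0 (-1) 1 0 w 1 1.
Definition G1i := mx3 1 (-1) w 0 1 1 0 0 1.
Definition G3i := mx3 1 0 0 1 1 0 (-1 - w) (-1) 1.

Lemma G1E : G1 C = G1m. Proof. by rewrite /G1 e1. Qed.
Lemma G3E : G3 C = G3m. Proof. by rewrite /G3m /w -lock. Qed.

Lemma G1iE : invmx G1m = G1i.
Proof. apply: inv_of; rewrite mx3_mul -mx3_1; congr mx3; ring. Qed.
Lemma G3iE : invmx G3m = G3i.
Proof. apply: inv_of; rewrite mx3_mul -mx3_1; congr mx3; ring. Qed.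

Lemma G2iE : invmx (G2 C) = G1i *m G3m *m G1m *m G3i.
Proof.
apply: inv_of; rewrite /G2 G1E G3E G1iE G3iE -!mulmxE !mx3_mul -mx3_1.
congr mx3; ring: (w2).
Qed.

Lemma gam2 : gamma C 2 *m Qpt C = col3 0 0 (-1).
Proof.
rewrite /gamma /= expr0 mul1r mulr1 G2iE Q_col !mx3_mul mx3_mulc.
congr col3; ring: (w2).
Qed.
Lemma gam3 : gamma C 3 *m Qpt C = col3 1 (-1) w.
Proof.
rewrite /gamma /= expr0 mul1r mulr1 G3E Q_col !mx3_mulc.
congr col3; ring: (w2).
Qed.
Lemma gam6 : gamma C 6 *m Qpt C = col3 (1 + w) 1 (-1).
Proof.
rewrite /gamma /= !expr1 G2iE G1E G1iE Q_col -!mulmxE !mx3_mul mx3_mulc.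
congr col3; ring: (w2).
Qed.
Lemma gam8 : gamma C 8 *m Qpt C = col3 (1 + w) (2 + w) (-1 - w).
Proof.
rewrite /gamma /= !expr1 G3E G1E G1iE G3iE Q_col -!mulmxE !mx3_mul mx3_mulc.
congr col3; ring: (w2).
Qed.

Ltac cpush := rewrite ?(rmorphD, rmorphN, rmorphB, rmorphM, rmorph1, rmorph0, rmorph_nat) /= ?wc.

Lemma key (Z : 'cV[C]_3) :
  2 * (2 * fj 0 Z + fj 2 Z + fj 6 Z - fj 3 Z - fj 8 Z) =
  4 * `|Z 0 0 + (-1 - w) * Z 1 0| ^+ 2 + `|2 * Z 1 0 + Z 2 0| ^+ 2 + `|Z 2 0| ^+ 2.
Proof.
rewrite /fj /= gam2 gam3 gam6 gam8 Q_col !herm_col3 herm_gen !normCK.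
cpush. cpush. ring: (w2).
Qed.

Definition Zw : 'cV[C]_3 := col3 (-1 - w) (-1) 2.

Lemma Zw_nz : Zw != 0.
Proof.
apply/eqP => h; have := congr1 (fun M : 'cV[C]_3 => M 2 0) h.
by rewrite !mxE /= => /eqP; rewrite pnatr_eq0.
Qed.

Lemma Zw3 : fj 3 Zw = 0.
Proof.
rewrite /fj /= gam3 Q_col !herm_col3 !mxE /= !normCK.
cpush. cpush. ring: (w2).
Qed.

Lemma Zw8 : fj 8 Zw = 0.
Proof.
rewrite /fj /= gam8 Q_col !herm_col3 !mxE /= !normCK.
cpush. cpush. ring: (w2).
Qed.

Lemma Zw0 : fj 0 Zw < 0.
Proof.
have -> : fj 0 Zw = -1.
  rewrite /fj /= herm_gen !mxE /=. cpush. cpush. ring: (w2).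
by rewrite ltrN10.
Qed.

Lemma partB (Z : 'cV[C]_3) : Z != 0 -> fj 3 Z = 0 -> fj 8 Z = 0 ->
  fj 0 Z <= 0 -> fj 2 Z <= 0 -> fj 6 Z <= 0 -> False.
Proof.
move=> nz h3 h8 h0 h2 h6.
have K := key Z; rewrite h3 h8 !subr0 in K.
set a := Z 0 0 + (-1 - w) * Z 1 0 in K; set b := 2 * Z 1 0 + Z 2 0 in K.
have hl : 2 * (2 * fj 0 Z + fj 2 Z + fj 6 Z) <= 0.
  have := lerD (lerD (mulr_ge0_le0 (ler0n _ 2) h0) h2) h6; rewrite !addr0 => hs.
  exact: mulr_ge0_le0 (ler0n _ 2) hs.
have pa : 0 <= 4 * `|a| ^+ 2 by rewrite mulr_ge0 ?ler0n ?exprn_ge0 ?normr_ge0.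
have pb : 0 <= `|b| ^+ 2 by rewrite exprn_ge0 ?normr_ge0.
have pc : 0 <= `|Z 2 0| ^+ 2 by rewrite exprn_ge0 ?normr_ge0.
have s0 : 4 * `|a| ^+ 2 + `|b| ^+ 2 + `|Z 2 0| ^+ 2 = 0.
  by apply/eqP; rewrite eq_le -K hl /= K !addr_ge0.
move/eqP: s0; rewrite paddr_eq0 ?addr_ge0 // => /andP[].
rewrite paddr_eq0 // => /andP[ea eb] ec.
move: ea; rewrite mulf_eq0 pnatr_eq0 /= sqrf_eq0 normr_eq0 => /eqP ea.
move: eb; rewrite sqrf_eq0 normr_eq0 => /eqP eb.
move: ec; rewrite sqrf_eq0 normr_eq0 => /eqP ec.
have e1' : Z 1 0 = 0.
  by move: eb; rewrite /b ec addr0 => /eqP; rewrite mulf_eq0 pnatr_eq0 /= => /eqP.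
have e0 : Z 0 0 = 0 by move: ea; rewrite /a e1' mulr0 addr0.
move/eqP: nz; apply; apply/matrixP => i j; rewrite (ord1 j) mxE.
by case: i => [[|[|[|?]]] ?] //=; [rewrite -e0 | rewrite -e1' | rewrite -ec]; congr (Z _ _); apply: val_inj.
Qed.

End S.

Theorem proposition5p8 (C : numClosedFieldType) :
  (exists Z : 'cV[C]_3,
     F (fun j => j = 3%N \/ j = 8%N) (fun i => i = 0%N) Z) /\
  (forall Z : 'cV[C]_3,
     ~ Fbar (fun j => j = 3%N \/ j = 8%N)
            (fun i => i = 0%N \/ i = 2%N \/ i = 6%N) Z) /\
  (forall Z : 'cV[C]_3,
     ~ F (fun j => j = 3%N \/ j = 8%N)
         (fun i => ~ (i = 3%N \/ i = 8%N)) Z).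
Proof.
split; [|split].
- exists (Zw C); split; first exact: (@Zw_nz C).
  split; first by move=> j [->|->]; [exact: (@Zw3 C) | exact: (@Zw8 C)].
  by move=> i ->; exact: (@Zw0 C).
- move=> Z [nz [hJ hK]].
  apply: (@partB C Z nz (hJ 3%N (or_introl erefl)) (hJ 8%N (or_intror erefl))).
  + exact: hK 0%N (or_introl erefl).
  + exact: hK 2%N (or_intror (or_introl erefl)).
  + exact: hK 6%N (or_intror (or_intror erefl)).
- move=> Z [nz [hJ hK]].
  apply: (@partB C Z nz (hJ 3%N (or_introl erefl)) (hJ 8%N (or_intror erefl))).
  + by apply: ltW; apply: hK; case.
  + by apply: ltW; apply: hK; case.
  + by apply: ltW; apply: hK; case.
Qed.
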